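(* Let $n\geq 3$ and let $T$ be the $n\times n$ symmetric tridiagonal matrix with diagonal entries $T_{ii}=a_i\geq 0$ ($1\le i\le n$), off-diagonal entries $T_{j,j+1}=T_{j+1,j}=b_j\geq 0$ ($1\le j\le n-1$), and all other entries zero. Then $T$ is infinitely divisible if and only if $T$ is positive semidefinite and $b_ib_{i+1}=0$ for every $i\in\{1,2,\ldots,n-2\}$.
   Context: For a nonnegative matrix $A=[a_{ij}]$ and $r>0$, the Hadamard power is $A^{\circ r}=[a_{ij}^r]$. A nonnegative symmetric matrix $A$ is infinitely divisible if $A^{\circ r}$ is positive semidefinite for every $r>0$. *)

(* Defs.v *)
From HB Require Import structures.
From mathcomp Require Import all_boot all_order all_algebra.
From mathcomp Require Import reals exp.
Set Implicit Arguments. Unset Strict Implicit. Unset Printing Implicit Defensive.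
Import Order.TTheory GRing.Theory Num.Theory.
Local Open Scope ring_scope.

Definition psd (R : realType) (n : nat) (A : 'M[R]_n) : Prop :=
  A^T = A /\ forall x : 'cV[R]_n, 0 <= (x^T *m A *m x) 0 0.

(* Hadamard power A^{o r} = [a_ij ^ r], using powR (with 0 `^ r = 0 for r > 0). *)
Definition hadamard_pow (R : realType) (n : nat) (A : 'M[R]_n) (r : R) : 'M[R]_n :=
  map_mx (fun x => x `^ r) A.

Definition infinitely_divisible (R : realType) (n : nat) (A : 'M[R]_n) : Prop :=
  (forall i j, 0 <= A i j) /\ A^T = A /\
  forall r : R, 0 < r -> psd (hadamard_pow A r).

(* Symmetric tridiagonal matrix, 0-based: diagonal a_0..a_{n-1},
   off-diagonal T_{j,j+1} = T_{j+1,j} = b_j for j < n-1. *)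
Definition tridiag (R : realType) (n : nat) (a b : nat -> R) : 'M[R]_n :=
  \matrix_(i < n, j < n)
    (if i == j :> nat then a i
     else if j == i.+1 :> nat then b i
     else if i == j.+1 :> nat then b j
     else 0).

(* Main.v *)
Require Import Defs.
From HB Require Import structures.
From mathcomp Require Import all_boot all_order all_algebra.
From mathcomp Require Import reals exp sequences.
From mathcomp Require Import zify ring lra.
Import Order.TTheory GRing.Theory Num.Theory.
Local Open Scope ring_scope.

Section S.
Context {R : realType}.

Definition tt (A B : nat -> R) (i j : nat) : R :=
  if i == j then A i else if j == i.+1 then B i else if i == j.+1 then B j else 0.

Definition Q (A B f : nat -> R) (m : nat) : R :=
  \sum_(0 <= k < m.+1) A k * f k ^+ 2 + 2 * \sum_(0 <= k < m) B k * f k * f k.+1.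

Lemma S_formula (A B f : nat -> R) m :
  \sum_(0 <= j < m.+1) \sum_(0 <= i < m.+1) f i * tt A B i j * f j = Q A B f m.
Proof.
elim: m => [|m IH].
  by rewrite /Q !big_nat1 big_geq // /tt eqxx; ring.
rewrite big_nat_recr //=.
under eq_big_nat => j _ do rewrite big_nat_recr //=.
rewrite big_split /= IH.
rewrite big_nat_recr //= big_nat_recr //=.
rewrite big_nat_recr //=.
have z1 : \sum_(0 <= i < m) f m.+1 * tt A B m.+1 i * f i = 0.
  rewrite big_nat_cond big1 // => i /andP[/andP[_ Hi] _].
  rewrite /tt !ifF ?mulr0 ?mul0r //; lia.
have z2 : \sum_(0 <= i < m) f i * tt A B i m.+1 * f m.+1 = 0.
  rewrite big_nat_cond big1 // => i /andP[/andP[_ Hi] _].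
  rewrite /tt !ifF ?mulr0 ?mul0r //; lia.
rewrite z1 z2 /Q big_nat_recr //= [in RHS]big_nat_recr //=.
rewrite /tt !eqxx !ifF; try lia.
rewrite [X in _ = X + _ + _]big_nat_recr //= [X in _ = _ + _ + 2 * X]big_nat_recr //=.
ring.
Qed.

Lemma tridiag_form m (A B f : nat -> R) :
  let x := \col_(k < m.+1) f k in
  (x^T *m tridiag m.+1 A B *m x) 0 0 = Q A B f m.
Proof.
move=> x; rewrite -S_formula mxE.
rewrite [RHS]big_mkord.
apply: eq_bigr => j _; rewrite !mxE mulr_suml big_mkord.
by apply: eq_bigr => i _; rewrite !mxE.
Qed.

Lemma tridiag_tr n (A B : nat -> R) : (tridiag n A B)^T = tridiag n A B.
Proof.
apply/matrixP => i j; rewrite !mxE.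
have [e|ne] := eqVneq (i:nat) j; first by rewrite e.
have [e2|ne2] := eqVneq (i:nat) j.+1; first by rewrite ifF //; lia.
by [].
Qed.

Lemma hadamard_tridiag n (A B : nat -> R) r : r != 0 ->
  hadamard_pow (tridiag n A B) r = tridiag n (fun i => A i `^ r) (fun j => B j `^ r).
Proof.
move=> r0; apply/matrixP => i j; rewrite !mxE.
by repeat case: ifP => _; rewrite ?powR0.
Qed.

Lemma sum_supp (F : nat -> R) N (s : seq nat) :
  uniq s -> all (fun i => i < N)%N s ->
  (forall i, (i < N)%N -> i \notin s -> F i = 0) ->
  \sum_(0 <= i < N) F i = \sum_(i <- s) F i.
Proof.
move=> us as0 H.
rewrite (bigID (fun i => i \in s)) /= [X in _ + X]big1_seq ?addr0; last first.
  move=> i /andP[Hi]; rewrite mem_index_iota => /andP[_ Hi2]; exact: H.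
rewrite -big_filter; apply: perm_big; apply: uniq_perm.
- by rewrite filter_uniq // iota_uniq.
- by [].
move=> i; rewrite mem_filter mem_index_iota /=.
case Hi: (i \in s); last by [].
by move/allP: as0 => /(_ i Hi) ->.
Qed.

Ltac simpif := repeat (rewrite ?eqxx /=; rewrite ifF; last lia).

Definition f2 (k : nat) (u v : R) i : R :=
  if i == k then u else if i == k.+1 then v else 0.
Definition f3 (k : nat) (u v w : R) i : R :=
  if i == k then u else if i == k.+1 then v else if i == k.+2 then w else 0.

Lemma f2_out k u v i : i != k -> i != k.+1 -> f2 k u v i = 0.
Proof. by rewrite /f2 => /negbTE -> /negbTE ->. Qed.
Lemma f3_out k u v w i : i != k -> i != k.+1 -> i != k.+2 -> f3 k u v w i = 0.
Proof. by rewrite /f3 => /negbTE -> /negbTE -> /negbTE ->. Qed.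

Lemma Q2 m (A B : nat -> R) k u v : (k < m)%N ->
  Q A B (f2 k u v) m = A k * u ^+ 2 + A k.+1 * v ^+ 2 + 2 * (B k * u * v).
Proof.
move=> km; rewrite /Q (sum_supp _ _ [:: k; k.+1]); first last.
- move=> i _; rewrite !inE => Hi; rewrite f2_out; try lia; by rewrite expr2 !mul0r mulr0.
- by rewrite /=; lia.
- by rewrite /= ?inE; lia.
rewrite (sum_supp _ _ [:: k]); first last.
- move=> i _; rewrite !inE => Hi.
  have [e|ne] := eqVneq i k.+1; first by rewrite e (f2_out k u v k.+2) ?mulr0 //; lia.
  by rewrite f2_out ?mulr0 ?mul0r //; lia.
- by rewrite /=; lia.
- by [].
rewrite !big_cons !big_nil /f2; simpif; ring.
Qed.

Lemma Q3 m (A B : nat -> R) k u v w : (k.+2 <= m)%N ->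
  Q A B (f3 k u v w) m = A k * u ^+ 2 + A k.+1 * v ^+ 2 + A k.+2 * w ^+ 2
     + 2 * (B k * u * v + B k.+1 * v * w).
Proof.
move=> km; rewrite /Q (sum_supp _ _ [:: k; k.+1; k.+2]); first last.
- move=> i _; rewrite !inE => Hi; rewrite f3_out; try lia; by rewrite expr2 !mul0r mulr0.
- by rewrite /=; lia.
- by rewrite /= ?inE; lia.
rewrite (sum_supp _ _ [:: k; k.+1]); first last.
- move=> i _; rewrite !inE => Hi.
  have [e|ne] := eqVneq i k.+2; first by rewrite e (f3_out k u v w k.+3) ?mulr0 //; lia.
  by rewrite f3_out ?mulr0 ?mul0r //; lia.
- by rewrite /=; lia.
- by rewrite /= ?inE; lia.
rewrite !big_cons !big_nil /f3; simpif; ring.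
Qed.

Lemma psd_Q m (A B : nat -> R) :
  psd (tridiag m.+1 A B) <-> forall f, 0 <= Q A B f m.
Proof.
split.
  by move=> [_ H] f; rewrite -tridiag_form; apply: H.
move=> H; split; first exact: tridiag_tr.
move=> x; pose f k := x (inord k) 0.
have -> : x = \col_(k < m.+1) f k.
  by apply/matrixP => i j; rewrite !mxE /f inord_val (ord1 j).
by rewrite tridiag_form.
Qed.

Lemma pair_ineq (a c b x y : R) : 0 <= a -> 0 <= c -> b ^+ 2 <= a * c ->
  0 <= a * x ^+ 2 + c * y ^+ 2 + 2 * (b * x * y).
Proof.
move=> a0 c0 h.
have [a_0|a_pos] := eqVneq a 0.
  have b0 : b = 0.
    by apply/eqP; rewrite -sqrf_eq0 eq_le sqr_ge0 andbT; move: h; rewrite a_0 mul0r.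
  by rewrite a_0 b0; nra.
have ap : 0 < a by rewrite lt_def a_pos a0.
have : 0 <= a * (a * x ^+ 2 + c * y ^+ 2 + 2 * (b * x * y)).
  have -> : a * (a * x ^+ 2 + c * y ^+ 2 + 2 * (b * x * y)) =
     (a * x + b * y) ^+ 2 + (a * c - b ^+ 2) * y ^+ 2 by ring.
  by apply: addr_ge0; [exact: sqr_ge0 | apply: mulr_ge0; [rewrite subr_ge0 | exact: sqr_ge0]].
by rewrite pmulr_rge0.
Qed.

Lemma pair_bound m (A B : nat -> R) k : (forall f, 0 <= Q A B f m) ->
  0 <= A k -> 0 <= A k.+1 -> (k < m)%N -> B k ^+ 2 <= A k * A k.+1.
Proof.
move=> H a0 c0 km.
have h1 := H (f2 k (- B k) (A k)); rewrite Q2 // in h1.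
have h2 := H (f2 k (A k.+1) (- B k)); rewrite Q2 // in h2.
have h3 := H (f2 k (- B k) 1); rewrite Q2 // in h3.
set a := A k in a0 h1 h2 h3 *; set c := A k.+1 in c0 h1 h2 h3 *; set b := B k in h1 h2 h3 *.
have e1 : a * (- b) ^+ 2 + c * a ^+ 2 + 2 * (b * - b * a) = a * (a * c - b ^+ 2) by ring.
have e2 : a * c ^+ 2 + c * (- b) ^+ 2 + 2 * (b * c * - b) = c * (a * c - b ^+ 2) by ring.
rewrite e1 in h1; rewrite e2 in h2.
have [a_0|a_pos] := eqVneq a 0.
  have [c_0|c_pos] := eqVneq c 0.
    rewrite a_0 c_0 in h3 *; nra.
  have cp : 0 < c by rewrite lt_def c_pos c0.
  by rewrite pmulr_rge0 // subr_ge0 in h2.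
have ap : 0 < a by rewrite lt_def a_pos a0.
by rewrite pmulr_rge0 // subr_ge0 in h1.
Qed.

Lemma Q_ge0 m (A B f : nat -> R) :
  (forall i, (i <= m)%N -> 0 <= A i) ->
  (forall k, (k < m)%N -> B k ^+ 2 <= A k * A k.+1) ->
  (forall k, (k.+1 < m)%N -> B k * B k.+1 = 0) -> 0 <= Q A B f m.
Proof.
move=> Ha Hb Hz.
pose s k : R := if (k < m)%N && (B k != 0) then 1 else 0.
pose s' k : R := if k is k'.+1 then s k' else 0.
pose w k := A k * f k ^+ 2.
have w0 : forall k, (k <= m)%N -> 0 <= w k.
  by move=> k hk; rewrite /w mulr_ge0 ?Ha ?sqr_ge0.
have step1 : forall k, (k < m)%N -> - (s k * (w k + w k.+1)) <= 2 * (B k * f k * f k.+1).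
  move=> k hk; rewrite /s hk /=.
  have [->|bn] := eqVneq (B k) 0; first by rewrite /= mul0r oppr0 !mul0r mulr0.
  rewrite /= mul1r lerNl -subr_ge0 opprK /w.
  have := pair_ineq (A k) (A k.+1) (B k) (f k) (f k.+1) (Ha k (ltnW hk)) (Ha k.+1 hk) (Hb k hk).
  by [].
have step2 : - \sum_(0 <= k < m) s k * (w k + w k.+1) <= 2 * \sum_(0 <= k < m) B k * f k * f k.+1.
  rewrite -sumrN mulr_sumr big_nat_cond [X in _ <= X]big_nat_cond.
  by apply: ler_sum => k /andP[/andP[_ hk] _]; exact: step1.
have step3 : \sum_(0 <= k < m) s k * (w k + w k.+1) = \sum_(0 <= k < m.+1) (s k + s' k) * w k.
  under eq_bigr do rewrite mulrDr.
  rewrite big_split /= [in RHS](eq_bigr (fun k => s k * w k + s' k * w k)); last by move=> k _; rewrite mulrDl.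
  rewrite [in RHS]big_split /= [in RHS]big_nat_recr //= [X in _ = _ + X]big_nat_recl //=.
  by rewrite /s ltnn /= mul0r addr0 mul0r add0r.
have step4 : \sum_(0 <= k < m.+1) (s k + s' k) * w k <= \sum_(0 <= k < m.+1) w k.
  rewrite big_nat_cond [X in _ <= X]big_nat_cond.
  apply: ler_sum => k /andP[/andP[_ hk] _].
  rewrite ler_piMl ?w0 //.
  rewrite /s' /s; case: k hk => [|k] hk.
    by case: ifP => _ ; rewrite ?addr0 // add0r.
  case: ifP => /= [/andP[k1 /negbTE b1]|_]; case: ifP => /= [/andP[k2 /negbTE b2]|_] //; rewrite ?addr0 ?add0r //.
  by move: (Hz k k1); move/eqP; rewrite mulf_eq0 b1 b2.
rewrite /Q.
have : - \sum_(0 <= k < m.+1) w k <= 2 * \sum_(0 <= k < m) B k * f k * f k.+1.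
  by apply: le_trans step2; rewrite lerN2 step3.
move=> h.
by move: h; rewrite lerNl -subr_ge0 opprK addrC.
Qed.
End S.

Lemma powR_exp (R : realType) (x r : R) : 0 < x -> x `^ r = expR (r * ln x).
Proof. by move=> x0; rewrite /powR gt_eqF. Qed.

Lemma pos_of (R : realType) (a b c : R) : 0 < b -> b ^+ 2 <= a * c -> 0 <= a -> 0 <= c ->
  0 < a /\ 0 < c.
Proof.
move=> b0 h a0 c0.
have ac : 0 < a * c by apply: lt_le_trans h; rewrite exprn_gt0.
by split; rewrite lt_def ?a0 ?c0 andbT; apply/negP => /eqP e; move: ac; rewrite e ?mul0r ?mulr0 ltxx.
Qed.

Arguments pos_of {R a b c}.
Arguments powR_exp {R x r}.

Theorem theorem1p4 (R : realType) (n : nat) (a b : nat -> R) :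
  (3 <= n)%N ->
  (forall i, (i < n)%N -> 0 <= a i) ->
  (forall j, (j.+1 < n)%N -> 0 <= b j) ->
  infinitely_divisible (tridiag n a b) <->
  (psd (tridiag n a b) /\ forall i, (i.+2 < n)%N -> b i * b i.+1 = 0).
Proof.
case: n => [//|m] hn ha hb.
have hadT r : 0 < r -> hadamard_pow (tridiag m.+1 a b) r =
   tridiag m.+1 (fun i => a i `^ r) (fun j => b j `^ r).
  by move=> hr; apply: hadamard_tridiag; rewrite gt_eqF.
split.
- move=> [hnn [hsym hpsd]].
  have psdT : psd (tridiag m.+1 a b).
    have := hpsd 1 ltr01.
    have -> // : hadamard_pow (tridiag m.+1 a b) 1 = tridiag m.+1 a b.
    by apply/matrixP => i j; rewrite mxE powRr1.
  split => // i hi.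
  apply/eqP; apply: contraT => hne.
  rewrite mulf_eq0 negb_or in hne; case/andP: hne => bi0 bi10.
  have bip : 0 < b i by rewrite lt_def bi0 hb //; lia.
  have bi1p : 0 < b i.+1 by rewrite lt_def bi10 hb //; lia.
  have HQ := proj1 (psd_Q _ _ _) psdT.
  have p1 := @pair_bound _ m a b i HQ (ha i ltac:(lia)) (ha i.+1 ltac:(lia)) ltac:(lia).
  have p2 := @pair_bound _ m a b i.+1 HQ (ha i.+1 ltac:(lia)) (ha i.+2 ltac:(lia)) ltac:(lia).
  have [ap cp] := pos_of bip p1 (ha i ltac:(lia)) (ha i.+1 ltac:(lia)).
  have [_ ep] := pos_of bi1p p2 (ha i.+1 ltac:(lia)) (ha i.+2 ltac:(lia)).
  set al := ln (a i); set be := ln (b i); set ga := ln (a i.+1);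
  set de := ln (b i.+1); set ep' := ln (a i.+2).
  pose t1 := 2 * be - al - ga; pose t2 := 2 * de - ga - ep'.
  pose K := t1 ^+ 2 + t2 ^+ 2 + 1.
  have K0 : 0 < K by rewrite /K; nra.
  pose r := (4 * K)^-1.
  have r0 : 0 < r by rewrite /r invr_gt0; nra.
  have rK : r * K = 1 / 4 by rewrite /r; field; rewrite gt_eqF.
  have h1 : - (1/4) <= r * t1.
    have : 0 <= r * (t1 + K) by rewrite mulr_ge0 ?ltW // /K; nra.
    by rewrite mulrDr rK; lra.
  have h2 : - (1/4) <= r * t2.
    have : 0 <= r * (t2 + K) by rewrite mulr_ge0 ?ltW // /K; nra.
    by rewrite mulrDr rK; lra.
  have := hpsd r r0; rewrite hadT // => /psd_Q HQr.
  set A := a i `^ r; set B := b i `^ r; set C := a i.+1 `^ r;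
  set D := b i.+1 `^ r; set E := a i.+2 `^ r.
  have := HQr (f3 i (- (B * E)) (A * E) (- (D * A))).
  rewrite Q3; last lia.
  rewrite -/A -/B -/C -/D -/E.
  have -> : A * (- (B * E)) ^+ 2 + C * (A * E) ^+ 2 + E * (- (D * A)) ^+ 2 +
     2 * (B * - (B * E) * (A * E) + D * (A * E) * - (D * A)) =
     (A * E) * (C * A * E - (B ^+ 2 * E + D ^+ 2 * A)) by ring.
  have AE : 0 < A * E by rewrite mulr_gt0 // powR_gt0.
  rewrite pmulr_rge0 // subr_ge0.
  pose X := r * ga + r * al + r * ep'.
  have eC : C * A * E = expR X.
    by rewrite /C /A /E !powR_exp // /X !expRD.
  have eB : B ^+ 2 * E = expR X * expR (r * t1).
    rewrite /B /E !powR_exp // expr2 -!expRD; congr expR; rewrite /X /t1 /al /be /ga /ep'; ring.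
  have eD : D ^+ 2 * A = expR X * expR (r * t2).
    rewrite /D /A !powR_exp // expr2 -!expRD; congr expR; rewrite /X /t2 /al /de /ga /ep'; ring.
  rewrite eC eB eD -mulrDr.
  have PX : 0 < expR X := expR_gt0 X.
  have g1 := expR_ge1Dx (r * t1).
  have g2 := expR_ge1Dx (r * t2).
  rewrite -subr_ge0 -{1}(mulr1 (expR X)) -mulrBr pmulr_rge0 //.
  lra.
- move=> [psdT hz].
  have HQ := proj1 (psd_Q _ _ _) psdT.
  split.
    move=> i j; rewrite mxE.
    case: ifP => [_|_]; first exact: ha.
    case: ifP => [/eqP e|_]; first by apply: hb; rewrite -e ltn_ord.
    case: ifP => [/eqP e|_] //; by apply: hb; rewrite -e ltn_ord.
  split; first exact: tridiag_tr.
  move=> r hr; rewrite hadT //; apply/psd_Q => f; apply: Q_ge0.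
  + by move=> i _; exact: powR_ge0.
  + move=> k hk.
    rewrite -powRM ?ha // ?ltnS 1?ltnW // expr2 -powRM ?hb // -expr2.
    apply: (ge0_ler_powR (ltW hr)).
    * by rewrite nnegrE sqr_ge0.
    * by rewrite nnegrE; apply: mulr_ge0; apply: ha; lia.
    * exact: (@pair_bound _ m a b k HQ (ha k ltac:(lia)) (ha k.+1 ltac:(lia)) hk).
  + move=> k hk; rewrite -powRM ?hb ?hz ?powR0 ?gt_eqF //; lia.
Qed.
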